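(* Let $\mathcal A$ be a GDN superalgebra. Then for every integer $n\ge1$, $\mathcal A^n_L$ is an ideal of $\mathcal A$, and $(\mathcal A^2)^n\subseteq\mathcal A^{n+1}_L$.
   Context: A GDN superalgebra is a superalgebra $\mathcal A=\mathcal A_0\oplus\mathcal A_1$ over a field (product $\circ$, $\mathcal A_i\circ\mathcal A_j\subseteq\mathcal A_{i+j}$ mod 2, $|x|=i$ for nonzero $x\in\mathcal A_i$) satisfying for homogeneous $x,y,z$: $x\circ(y\circ z)-(x\circ y)\circ z=(-1)^{|x||y|}(y\circ(x\circ z)-(y\circ x)\circ z)$ and $(x\circ y)\circ z=(-1)^{|y||z|}(x\circ z)\circ y$. For subspaces $\mathcal V_i$, $[\mathcal V_1,\dots,\mathcal V_n]_L$ is the span of $((\cdots(x_1\circ x_2)\cdots)\circ x_n)$ with $x_i\in\mathcal V_i$, and $\mathcal A^n_L=[\mathcal A,\dots,\mathcal A]_L$ ($n$ copies). For a subspace $\mathcal V$, $\mathcal V^1=\mathcal V$ and $\mathcal V^n=\sum_{i=1}^{n-1}\mathcal V^i\circ\mathcal V^{n-i}$ (span of products); $\mathcal A^2=\mathcal A\circ\mathcal A$. *)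

(* Defs.v *)
From HB Require Import structures.
From mathcomp Require Import all_boot all_order all_algebra.
Set Implicit Arguments. Unset Strict Implicit. Unset Printing Implicit Defensive.
Import Order.TTheory GRing.Theory Num.Theory.
Local Open Scope ring_scope.

(* A superalgebra over a field F: an F-vector space V (arbitrary dimension)
   with a bilinear product and a Z/2-grading V = A0 (+) A1 given by the
   predicates grade false (= A_0) and grade true (= A_1). *)
Record superalgebra (F : fieldType) (V : lmodType F) := SuperAlgebra {
  smul : V -> V -> V;
  smulDl : forall x y z, smul (x + y) z = smul x z + smul y z;
  smulDr : forall x y z, smul x (y + z) = smul x y + smul x z;
  smulZl : forall (a : F) x y, smul (a *: x) y = a *: smul x y;
  smulZr : forall (a : F) x y, smul x (a *: y) = a *: smul x y;
  grade : bool -> V -> Prop;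
  grade0 : forall i, grade i 0;
  gradeD : forall i x y, grade i x -> grade i y -> grade i (x + y);
  gradeZ : forall i (a : F) x, grade i x -> grade i (a *: x);
  grade_sum : forall v, exists v0 v1,
      grade false v0 /\ grade true v1 /\ v = v0 + v1;
  grade_direct : forall v, grade false v -> grade true v -> v = 0;
  grade_mul : forall i j x y, grade i x -> grade j y ->
      grade (addb i j) (smul x y)
}.

Arguments superalgebra : clear implicits.

Section GDN.
Variables (F : fieldType) (V : lmodType F) (A : superalgebra F V).
Local Notation "x ** y" := (smul A x y) (at level 40, left associativity) : ring_scope.

(* (-1)^(|x||y|) for parities i j *)
Definition psign (i j : bool) : F := (-1) ^+ (i && j).

Definition is_GDN : Prop :=
  (forall i j k x y z, grade A i x -> grade A j y -> grade A k z ->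
     x ** (y ** z) - (x ** y) ** z =
     psign i j *: (y ** (x ** z) - (y ** x) ** z)) /\
  (forall i j k x y z, grade A i x -> grade A j y -> grade A k z ->
     (x ** y) ** z = psign j k *: ((x ** z) ** y)).

Inductive span (S : V -> Prop) : V -> Prop :=
| span_base v : S v -> span S v
| span_zero : span S 0
| span_add x y : span S x -> span S y -> span S (x + y)
| span_scale (a : F) x : span S x -> span S (a *: x).

(* A^n_L : span of left-normed products ((x1 x2) ...) xn *)
Definition Lpow (n : nat) : V -> Prop :=
  span (fun v => exists (x : V) (xs : seq V),
           size xs = n.-1 /\ v = foldl (smul A) x xs).

Definition Asq : V -> Prop := span (fun v => exists x y, v = x ** y).

(* For a subspace S: S^1 = S, S^n = sum_{i=1}^{n-1} S^i o S^{n-i} (span). *)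
Inductive spow (S : V -> Prop) : nat -> V -> Prop :=
| spow_base v : S v -> spow S 1 v
| spow_mul i j x y : (0 < i)%N -> (0 < j)%N -> spow S i x -> spow S j y ->
    spow S (i + j) (x ** y)
| spow_zero n : (1 < n)%N -> spow S n 0
| spow_add n x y : (1 < n)%N -> spow S n x -> spow S n y -> spow S n (x + y)
| spow_scale n (a : F) x : (1 < n)%N -> spow S n x -> spow S n (a *: x).

Definition is_ideal (I : V -> Prop) : Prop :=
  I 0 /\ (forall x y, I x -> I y -> I (x + y)) /\
  (forall (a : F) x, I x -> I (a *: x)) /\
  (forall a x, I x -> I (a ** x)) /\ (forall a x, I x -> I (x ** a)).

End GDN.

(* Main.v *)
Require Import Defs.
From HB Require Import structures.
From mathcomp Require Import all_boot all_order all_algebra.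

Set Implicit Arguments. Unset Strict Implicit.
Import GRing.Theory.

Section Aux.
Local Notation span := Defs.span.
Local Open Scope ring_scope.
Variables (F : fieldType) (V : lmodType F) (A : superalgebra F V).
Local Notation "x ** y" := (smul A x y) (at level 40, left associativity).

Definition hom (v : V) := exists i, grade A i v.

Inductive LN : nat -> V -> Prop :=
| ln1 x : LN 1 x
| lnS n v y : LN n v -> LN n.+1 (v ** y).

Inductive HLn : nat -> V -> Prop :=
| hl1 x : hom x -> HLn 1 x
| hlS n v y : HLn n v -> hom y -> HLn n.+1 (v ** y).

Local Notation Lp n := (span (LN n)).

Lemma smul0l y : 0 ** y = 0.
Proof. have := smulZl A 0 0 y; by rewrite !scale0r. Qed.
Lemma smul0r y : y ** 0 = 0.
Proof. have := smulZr A 0 y 0; by rewrite !scale0r. Qed.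

Lemma span_mono (S T : V -> Prop) : (forall v, S v -> T v) ->
  forall v, span S v -> span T v.
Proof.
move=> H v; elim => [u Su|| x y _ IHx _ IHy | a x _ IHx].
- apply: span_base; exact: H.
- exact: span_zero.
- exact: span_add.
- exact: span_scale.
Qed.

Lemma span_bind (S T : V -> Prop) : (forall v, S v -> span T v) ->
  forall v, span S v -> span T v.
Proof.
move=> H v; elim => [u Su|| x y _ IHx _ IHy | a x _ IHx].
- exact: H.
- exact: span_zero.
- exact: span_add.
- exact: span_scale.
Qed.

Lemma span_sub (S : V -> Prop) x y : span S x -> span S y -> span S (x - y).
Proof.
move=> hx hy; rewrite -scaleN1r; apply: span_add => //; exact: span_scale.
Qed.

Lemma span_mulr (S T : V -> Prop) y : (forall s, S s -> span T (s ** y)) ->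
  forall v, span S v -> span T (v ** y).
Proof.
move=> H v; elim => [u Su|| x z _ IHx _ IHz | a x _ IHx].
- exact: H.
- rewrite smul0l; exact: span_zero.
- rewrite smulDl; exact: span_add.
- rewrite smulZl; exact: span_scale.
Qed.

Lemma span_mull (S T : V -> Prop) y : (forall s, S s -> span T (y ** s)) ->
  forall v, span S v -> span T (y ** v).
Proof.
move=> H v; elim => [u Su|| x z _ IHx _ IHz | a x _ IHx].
- exact: H.
- rewrite smul0r; exact: span_zero.
- rewrite smulDr; exact: span_add.
- rewrite smulZr; exact: span_scale.
Qed.

Lemma LN_pos n v : LN n v -> (0 < n)%N.
Proof. by case. Qed.

Lemma HL_pos n v : HLn n v -> (0 < n)%N.
Proof. by case. Qed.

Lemma LN_le n v : LN n v -> forall m, (0 < m)%N -> (m <= n)%N -> LN m v.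
Proof.
elim=> [x|k w y Hw IH] m m0 mn.
- have -> : m = 1%N by apply/eqP; rewrite eqn_leq mn.
  exact: ln1.
- case: m m0 mn => [|m] // _ mn.
  case: m mn => [|m] mn; first exact: ln1.
  apply: lnS; apply: IH => //.
Qed.

Lemma hom_HL n v : HLn n v -> hom v.
Proof.
elim=> [x hx| k w y _ [i hw] [j hy]] //.
exists (addb i j); exact: grade_mul.
Qed.

Lemma HL_LN n v : HLn n v -> LN n v.
Proof. elim=> [x _|k w y _ IH _]; [exact: ln1 | exact: lnS]. Qed.

Lemma hom_split x : exists x0 x1, hom x0 /\ hom x1 /\ x = x0 + x1.
Proof.
have [x0 [x1 [h0 [h1 ->]]]] := grade_sum A x.
by exists x0, x1; split; [exists false|split; [exists true|]].
Qed.

Lemma LN_HL n v : LN n v -> span (HLn n) v.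
Proof.
elim=> [x|k w y _ IH].
- have [x0 [x1 [h0 [h1 ->]]]] := hom_split x.
  by apply: span_add; apply: span_base; apply: hl1.
- have [y0 [y1 [h0 [h1 ->]]]] := hom_split y.
  rewrite smulDr; apply: span_add; apply: (span_mulr _ IH) => s Hs;
  apply: span_base; exact: hlS.
Qed.

Lemma foldl_LN xs x : LN (size xs).+1 (foldl (smul A) x xs).
Proof.
elim/last_ind: xs => [|xs y IH]; first exact: ln1.
rewrite foldl_rcons size_rcons; exact: lnS.
Qed.

Lemma LN_foldl n v : LN n v ->
  exists x xs, size xs = n.-1 /\ v = foldl (smul A) x xs.
Proof.
move=> H; elim: H => [x|k w y Hw [x [xs [Hs ->]]]].
- by exists x, [::].
- exists x, (rcons xs y); rewrite size_rcons foldl_rcons Hs prednK //.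
  exact: LN_pos Hw.
Qed.

Hypothesis HG : is_GDN A.

Lemma left_hom n a s : hom a -> HLn n s -> Lp n (a ** s).
Proof.
move=> [i ha]; elim => [x hx | k w z Hw IH [l hz]].
- apply: span_base; exact: ln1.
- have [j hw] := hom_HL Hw.
  have H1 := HG.1 i j l a w z ha hw hz.
  rewrite (_ : a ** (w ** z) = (a ** w) ** z + (a ** (w ** z) - (a ** w) ** z));
    last by rewrite addrC subrK.
  rewrite H1; apply: span_add.
  + apply: (span_mulr _ IH) => s0 Hs; apply: span_base; exact: lnS.
  + apply: span_scale; apply: span_sub; apply: span_base.
    * exact: lnS (HL_LN Hw).
    * apply: (LN_le (lnS z (lnS a (HL_LN Hw)))) => //.
Qed.

Lemma left_ideal n a v : Lp n v -> Lp n (a ** v).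
Proof.
move=> Hv.
have Hv' : span (HLn n) v by apply: (span_bind (@LN_HL n)).
have [a0 [a1 [h0 [h1 ->]]]] := hom_split a.
rewrite smulDl; apply: span_add; apply: (span_mull _ Hv') => s Hs;
exact: left_hom.
Qed.

Lemma right_ideal n a v : (0 < n)%N -> Lp n v -> Lp n (v ** a).
Proof.
move=> n0; apply: span_mulr => s Hs; apply: span_base.
exact: (LN_le (lnS a Hs)).
Qed.

Lemma prod_HL p u : HLn p u -> forall q v, hom v -> Lp q v ->
  Lp (p + q).-1 (u ** v).
Proof.
elim => [x hx | k w y Hw IH [j hy]] q v hv Lv.
- exact: left_ideal.
- have [i hw] := hom_HL Hw.
  have [l hv'] := hv.
  rewrite (HG.2 i j l w y v hw hy hv'); apply: span_scale.
  have k0 := HL_pos Hw.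
  have e : (k.+1 + q).-1 = ((k + q).-1).+1.
    by rewrite addSn /= prednK // addn_gt0 k0.
  rewrite e; apply: (span_mulr _ (IH q v hv Lv)) => s Hs.
  apply: span_base; exact: lnS.
Qed.

Lemma prod_L p q x y : Lp p x -> Lp q y -> Lp (p + q).-1 (x ** y).
Proof.
move=> Hx Hy.
have Hx' : span (HLn p) x by apply: (span_bind (@LN_HL p)).
have Hy' : span (HLn q) y by apply: (span_bind (@LN_HL q)).
apply: (span_mulr _ Hx') => s Hs; apply: (span_mull _ Hy') => t Ht.
apply: (prod_HL Hs); [exact: hom_HL Ht | apply: span_base; exact: HL_LN].
Qed.

Lemma Lpow_Lp n v : (0 < n)%N -> Lpow A n v <-> Lp n v.
Proof.
move=> n0; split; apply: span_mono.
- move=> u [x [xs [Hs ->]]]; have := foldl_LN xs x; by rewrite Hs prednK.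
- exact: LN_foldl.
Qed.

Lemma spow_Lp n v : spow A (Asq A) n v -> Lp n.+1 v.
Proof.
elim => {n v}.
- move=> v Hv; apply: (span_mono _ Hv) => u [x [y ->]]; exact: lnS (ln1 x).
- move=> i j x y i0 j0 _ IHx _ IHy.
  have -> : (i + j).+1 = (i.+1 + j.+1).-1 by rewrite addSn addnS.
  exact: prod_L.
- move=> n _; exact: span_zero.
- move=> n x y _ _ IHx _ IHy; exact: span_add.
- move=> n a x _ _ IH; exact: span_scale.
Qed.

End Aux.

Theorem lemma4p2 (F : fieldType) (V : lmodType F) (A : superalgebra F V) :
  is_GDN A ->
  forall n : nat, (1 <= n)%N ->
    is_ideal A (Lpow A n) /\
    (forall v, spow A (Asq A) n v -> Lpow A n.+1 v).
Proof.
move=> HG n n0; split.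
- split; first exact: span_zero.
  split; first by move=> x y; exact: span_add.
  split; first by move=> a x; exact: span_scale.
  split=> a x /(Lpow_Lp _ _ n0) Hx; apply/(Lpow_Lp _ _ n0).
  + exact: left_ideal.
  + exact: right_ideal.
- move=> v /(spow_Lp HG) H; apply/Lpow_Lp => //.
Qed.
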